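(* Let $\psi(z)=\sum_{n\ge 0} b_n z^n\in\mathcal K$ have radius of convergence $R_\psi>0$. If $\psi\in\mathcal K^\star$ with apex $\tau\in(0,R_\psi)$, then the function $t\mapsto t/\psi(t)$ (1) is strictly increasing on $[0,\tau)$, (2) is strictly decreasing on $(\tau,R_\psi)$, and (3) attains its maximum at $t=\tau$. If $\psi\in\mathcal K\setminus\mathcal K^\star$, then $t\mapsto t/\psi(t)$ is strictly increasing on $(0,R_\psi)$.
   Context: $\mathcal K$ denotes the class of non-constant power series $f(z)=\sum_{n\ge0}a_nz^n$ with positive radius of convergence $R$, non-negative coefficients and $a_0>0$. The Khinchin family of $f\in\mathcal K$ is the family of random variables $(X_t)_{t\in[0,R)}$ with $\mathbf P(X_t=n)=a_nt^n/f(t)$ for $n\ge0$, $t\in(0,R)$, and $X_0\equiv0$; its mean is $m_f(t)=\mathbf E(X_t)=tf'(t)/f(t)$, which is increasing in $t$. $\mathcal K^\star$ is the subclass of $f\in\mathcal K$ with $\lim_{t\uparrow R}m_f(t)>1$; for such $f$ the apex is the unique $\tau\in(0,R)$ with $m_f(\tau)=1$. *)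

(* Defs.v *)
From Stdlib Require Import Reals.
From Coquelicot Require Import Coquelicot.
Open Scope R_scope.

Definition in_K (a : nat -> R) : Prop :=
  Rbar_lt 0 (CV_radius a) /\
  (forall n, 0 <= a n) /\
  0 < a 0%nat /\
  (exists n, (1 <= n)%nat /\ a n <> 0).


Definition mean_f (a : nat -> R) (t : R) : R :=
  t * Derive (PSeries a) t / PSeries a t.

Definition left_of (Rad : Rbar) : (R -> Prop) -> Prop :=
  match Rad with
  | Finite r => at_left r
  | p_infty => Rbar_locally p_infty
  | m_infty => Rbar_locally m_infty
  end.

Definition in_Kstar (a : nat -> R) : Prop :=
  in_K a /\
  exists l : Rbar,
    filterlim (mean_f a) (left_of (CV_radius a)) (Rbar_locally l) /\
    Rbar_lt 1 l.

(* Main.v *)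
Require Import Defs.
From Stdlib Require Import Reals Lra Lia.
From Coquelicot Require Import Coquelicot.
Open Scope R_scope.

Lemma ps_lim_gen (c : nat -> R) x l : is_pseries c x l ->
  is_lim_seq (fun N => sum_f_R0 (fun k => c k * x^k) N) l.
Proof.
  intro H. unfold is_pseries, is_series in H.
  unfold is_lim_seq. simpl.
  eapply filterlim_ext; [|exact H].
  intro N. simpl. rewrite sum_n_Reals. apply sum_eq. intros i _.
  rewrite pow_n_pow. unfold scal; simpl. unfold mult; simpl. ring.
Qed.

Lemma ps_lim (a : nat -> R) x : Rbar_lt (Rabs x) (CV_radius a) ->
  is_lim_seq (fun N => sum_f_R0 (fun k => a k * x^k) N) (PSeries a x).
Proof.
  intro H. apply ps_lim_gen, PSeries_correct, CV_radius_inside, H.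
Qed.

Lemma ps_dlim (a : nat -> R) x : Rbar_lt (Rabs x) (CV_radius a) ->
  is_lim_seq (fun N => sum_f_R0 (fun k => INR k * a k * x^k) N) (x * Derive (PSeries a) x).
Proof.
  intro H. rewrite Derive_PSeries by exact H.
  assert (H1 : is_pseries (PS_derive a) x (PSeries (PS_derive a) x)).
  { apply PSeries_correct, CV_radius_inside. rewrite CV_radius_derive. exact H. }
  apply is_pseries_incr_1 in H1.
  apply ps_lim_gen in H1.
  eapply is_lim_seq_ext; [|exact H1].
  intro N. apply sum_eq. intros [|i] _; simpl.
  - unfold zero; simpl. ring.
  - unfold PS_incr_1, PS_derive. reflexivity.
Qed.

Lemma pow_lt_strict s t n : 0 <= s -> s < t -> (1 <= n)%nat -> s^n < t^n.
Proof.
  intros Hs Hst Hn. induction n as [|n IH]; [lia|].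
  destruct n as [|n]. { simpl. lra. }
  assert (IH' : s ^ S n < t ^ S n) by (apply IH; lia).
  change (s * s^(S n) < t * t^(S n)).
  assert (0 <= s^(S n)) by (apply pow_le; lra).
  nra.
Qed.

Section Fin.
Variable a : nat -> R.
Hypothesis Ha : forall n, 0 <= a n.
Variables s t : R.
Hypothesis Hs : 0 <= s.
Hypothesis Hst : s <= t.

Definition SA N := sum_f_R0 (fun k => INR k * a k * t^k) N.
Definition SB N := sum_f_R0 (fun k => a k * s^k) N.
Definition SC N := sum_f_R0 (fun k => INR k * a k * s^k) N.
Definition SE N := sum_f_R0 (fun k => a k * t^k) N.
Definition SP N := SA N * SB N - SC N * SE N.
Definition SQ M N := sum_f_R0 (fun k => a k * (INR M - INR k) * (t^M * s^k - s^M * t^k)) N.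

Lemma SQ_id M N : INR M * (t^M * SB N - s^M * SE N) + s^M * SA N - t^M * SC N = SQ M N.
Proof.
  induction N as [|N IH]; unfold SA, SB, SC, SE, SQ in *; simpl sum_f_R0.
  - ring.
  - rewrite <- IH. ring.
Qed.

Lemma SP_step N : SP (S N) = SP N + a (S N) * SQ (S N) N.
Proof.
  rewrite <- SQ_id. unfold SP, SA, SB, SC, SE. rewrite !tech5. cbv beta.
  ring.
Qed.

Lemma term_nonneg M k : (k <= M)%nat -> 0 <= t^M * s^k - s^M * t^k.
Proof.
  intro H. replace M with (k + (M - k))%nat by lia.
  rewrite !pow_add.
  assert (0 <= s^k) by (apply pow_le; lra).
  assert (0 <= t^k) by (apply pow_le; lra).
  assert (s^(M-k) <= t^(M-k)) by (apply pow_incr; lra).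
  assert (0 <= s^k * t^k * (t^(M-k) - s^(M-k))).
  { apply Rmult_le_pos; [apply Rmult_le_pos|]; lra. }
  nra.
Qed.

Lemma SQ_ge M N : (N < M)%nat -> a 0%nat * INR M * (t^M - s^M) <= SQ M N.
Proof.
  intro H. induction N as [|N IH].
  - unfold SQ. simpl. right. ring.
  - unfold SQ in *. rewrite tech5.
    assert (0 <= a (S N) * (INR M - INR (S N)) * (t ^ M * s ^ S N - s ^ M * t ^ S N)).
    { apply Rmult_le_pos; [apply Rmult_le_pos|].
      - apply Ha.
      - assert (INR (S N) <= INR M) by (apply le_INR; lia). lra.
      - apply term_nonneg. lia. }
    assert (a 0%nat * INR M * (t ^ M - s ^ M) <= sum_f_R0 (fun k : nat => a k * (INR M - INR k) * (t ^ M * s ^ k - s ^ M * t ^ k)) N) by (apply IH; lia).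
    lra.
Qed.

Lemma SQ_nonneg N : 0 <= SQ (S N) N.
Proof.
  eapply Rle_trans; [|apply SQ_ge; lia].
  apply Rmult_le_pos; [apply Rmult_le_pos|].
  - apply Ha.
  - apply pos_INR.
  - assert (s ^ S N <= t ^ S N) by (apply pow_incr; lra). lra.
Qed.

Lemma SP_nonneg N : 0 <= SP N.
Proof.
  induction N as [|N IH].
  - unfold SP, SA, SB, SC, SE. simpl. lra.
  - rewrite SP_step. assert (0 <= a (S N) * SQ (S N) N).
    { apply Rmult_le_pos; [apply Ha|apply SQ_nonneg]. } lra.
Qed.

Lemma SP_mono n N : (n <= N)%nat -> SP n <= SP N.
Proof.
  induction 1. lra. rewrite SP_step.
  assert (0 <= a (S m) * SQ (S m) m).
  { apply Rmult_le_pos; [apply Ha|apply SQ_nonneg]. } lra.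
Qed.

Lemma SP_low n : (1 <= n)%nat -> a n * (a 0%nat * INR n * (t^n - s^n)) <= SP n.
Proof.
  intro Hn. destruct n as [|n]; [lia|].
  rewrite SP_step. pose proof (SP_nonneg n).
  assert (a (S n) * (a 0%nat * INR (S n) * (t ^ S n - s ^ S n)) <= a (S n) * SQ (S n) n).
  { apply Rmult_le_compat_l; [apply Ha|]. apply SQ_ge. lia. }
  lra.
Qed.
End Fin.
Section An.
Variable a : nat -> R.
Hypothesis HK : in_K a.

Lemma Ha : forall n, 0 <= a n.
Proof. apply HK. Qed.

Lemma in_rad x : 0 <= x -> Rbar_lt x (CV_radius a) -> Rbar_lt (Rabs x) (CV_radius a).
Proof. intros H1 H2. rewrite Rabs_pos_eq by lra. exact H2. Qed.

Lemma f_pos x : 0 <= x -> Rbar_lt x (CV_radius a) -> 0 < PSeries a x.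
Proof.
  intros H1 H2.
  pose proof (ps_lim a x (in_rad x H1 H2)) as L.
  assert (Hle : forall N, a 0%nat <= sum_f_R0 (fun k => a k * x^k) N).
  { induction N as [|N IH]. simpl; lra.
    rewrite tech5. assert (0 <= a (S N) * x ^ S N).
    { apply Rmult_le_pos; [apply Ha|apply pow_le; lra]. } lra. }
  pose proof (is_lim_seq_le _ _ _ _ Hle (is_lim_seq_const (a 0%nat)) L) as H.
  simpl in H. destruct HK as (_ & _ & H0 & _). lra.
Qed.

Lemma m_strict s t : 0 <= s -> s < t -> Rbar_lt t (CV_radius a) ->
  mean_f a s < mean_f a t.
Proof.
  intros Hs Hst Ht.
  assert (Hs' : Rbar_lt s (CV_radius a)).
  { eapply Rbar_le_lt_trans; [|exact Ht]. simpl; lra. }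
  pose proof (f_pos s Hs Hs') as Fs. pose proof (f_pos t ltac:(lra) Ht) as Ft.
  pose proof (ps_dlim a t (in_rad t ltac:(lra) Ht)) as LA.
  pose proof (ps_lim a s (in_rad s Hs Hs')) as LB.
  pose proof (ps_dlim a s (in_rad s Hs Hs')) as LC.
  pose proof (ps_lim a t (in_rad t ltac:(lra) Ht)) as LE.
  pose proof (is_lim_seq_minus' _ _ _ _ (is_lim_seq_mult' _ _ _ _ LA LB) (is_lim_seq_mult' _ _ _ _ LC LE)) as LP.
  destruct HK as (_ & _ & H0 & n0 & Hn0 & Hn0').
  assert (Hpos : 0 < a n0 * (a 0%nat * INR n0 * (t^n0 - s^n0))).
  { assert (0 < a n0) by (pose proof (Ha n0); lra).
    assert (0 < INR n0) by (apply lt_0_INR; lia).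
    assert (s^n0 < t^n0) by (apply pow_lt_strict; auto).
    assert (0 < t^n0 - s^n0) by lra.
    apply Rmult_lt_0_compat; auto. apply Rmult_lt_0_compat; auto.
    apply Rmult_lt_0_compat; auto. }
  apply (is_lim_seq_incr_n _ n0) in LP.
  assert (Hb : forall N, a n0 * (a 0%nat * INR n0 * (t^n0 - s^n0)) <= SP a s t (N + n0)).
  { intro N. eapply Rle_trans. apply SP_low; auto. apply Ha. lra.
    apply SP_mono; [apply Ha|lra|lra|lia]. }
  pose proof (is_lim_seq_le _ _ _ _ Hb (is_lim_seq_const _) LP) as H.
  simpl in H.
  unfold mean_f.
  apply (Rmult_lt_reg_r (PSeries a s * PSeries a t)). nra.
  field_simplify; try lra.
Qed.

Lemma g_deriv c : 0 <= c -> Rbar_lt c (CV_radius a) ->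
  is_derive (fun x => x / PSeries a x) c
    ((1 * PSeries a c - c * Derive (PSeries a) c) / (PSeries a c)^2).
Proof.
  intros H1 H2.
  apply is_derive_div.
  - apply (is_derive_id c).
  - apply Derive_correct, ex_derive_PSeries, in_rad; auto.
  - pose proof (f_pos c H1 H2). lra.
Qed.

Lemma g_cont c : 0 <= c -> Rbar_lt c (CV_radius a) ->
  continuity_pt (fun x => x / PSeries a x) c.
Proof.
  intros H1 H2. apply continuity_pt_filterlim.
  apply (ex_derive_continuous (fun x => x / PSeries a x)).
  eexists. apply g_deriv; auto.
Qed.

Lemma g_mvt s t : s < t ->
  (forall c, s <= c <= t -> 0 <= c /\ Rbar_lt c (CV_radius a)) ->
  exists c, s <= c <= t /\
    t / PSeries a t - s / PSeries a s =
      ((1 * PSeries a c - c * Derive (PSeries a) c) / (PSeries a c)^2) * (t - s).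
Proof.
  intros Hst Hc.
  destruct (MVT_gen (fun x => x / PSeries a x) s t
     (fun c => (1 * PSeries a c - c * Derive (PSeries a) c) / (PSeries a c)^2)) as [c [Hc1 Hc2]].
  - intros x Hx. rewrite Rmin_left in Hx by lra. rewrite Rmax_right in Hx by lra.
    destruct (Hc x) as [A B]; [lra|]. apply g_deriv; auto.
  - intros x Hx. rewrite Rmin_left in Hx by lra. rewrite Rmax_right in Hx by lra.
    destruct (Hc x) as [A B]; [lra|]. apply g_cont; auto.
  - rewrite Rmin_left in Hc1 by lra. rewrite Rmax_right in Hc1 by lra.
    exists c. split; auto.
Qed.

Lemma g_incr s t : s < t ->
  (forall c, s <= c <= t -> 0 <= c /\ Rbar_lt c (CV_radius a) /\ mean_f a c < 1) ->
  s / PSeries a s < t / PSeries a t.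
Proof.
  intros Hst Hc.
  destruct (g_mvt s t Hst) as [c [Hc1 Hc2]].
  { intros c Hc'. destruct (Hc c Hc') as [A [B _]]. auto. }
  destruct (Hc c Hc1) as [A [B C]].
  pose proof (f_pos c A B) as F. unfold mean_f in C.
  assert (c * Derive (PSeries a) c < PSeries a c).
  { apply (Rmult_lt_compat_r (PSeries a c)) in C; auto.
    field_simplify in C; lra. }
  assert (0 < (1 * PSeries a c - c * Derive (PSeries a) c) / PSeries a c ^ 2).
  { apply Rdiv_lt_0_compat. lra. apply pow_lt. lra. }
  nra.
Qed.

Lemma g_decr s t : s < t ->
  (forall c, s <= c <= t -> 0 <= c /\ Rbar_lt c (CV_radius a) /\ 1 < mean_f a c) ->
  t / PSeries a t < s / PSeries a s.
Proof.
  intros Hst Hc.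
  destruct (g_mvt s t Hst) as [c [Hc1 Hc2]].
  { intros c Hc'. destruct (Hc c Hc') as [A [B _]]. auto. }
  destruct (Hc c Hc1) as [A [B C]].
  pose proof (f_pos c A B) as F. unfold mean_f in C.
  assert (PSeries a c < c * Derive (PSeries a) c).
  { apply (Rmult_lt_compat_r (PSeries a c)) in C; auto.
    field_simplify in C; lra. }
  assert (0 < (c * Derive (PSeries a) c - 1 * PSeries a c) / PSeries a c ^ 2).
  { apply Rdiv_lt_0_compat. lra. apply pow_lt. lra. }
  assert (E : (1 * PSeries a c - c * Derive (PSeries a) c) / PSeries a c ^ 2 =
     - ((c * Derive (PSeries a) c - 1 * PSeries a c) / PSeries a c ^ 2)) by (field; lra).
  rewrite E in Hc2. nra.
Qed.

Lemma g_incr_le s t : s < t ->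
  (forall c, s <= c <= t -> 0 <= c /\ Rbar_lt c (CV_radius a) /\ mean_f a c <= 1) ->
  s / PSeries a s <= t / PSeries a t.
Proof.
  intros Hst Hc.
  destruct (g_mvt s t Hst) as [c [Hc1 Hc2]].
  { intros c Hc'. destruct (Hc c Hc') as [A [B _]]. auto. }
  destruct (Hc c Hc1) as [A [B C]].
  pose proof (f_pos c A B) as F. unfold mean_f in C.
  assert (c * Derive (PSeries a) c <= PSeries a c).
  { apply (Rmult_le_compat_r (PSeries a c)) in C; [|lra].
    field_simplify in C; lra. }
  assert (0 <= (1 * PSeries a c - c * Derive (PSeries a) c) / PSeries a c ^ 2).
  { apply Rmult_le_pos. lra. left. apply Rinv_0_lt_compat, pow_lt. lra. }
  nra.
Qed.

Lemma g_decr_le s t : s < t ->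
  (forall c, s <= c <= t -> 0 <= c /\ Rbar_lt c (CV_radius a) /\ 1 <= mean_f a c) ->
  t / PSeries a t <= s / PSeries a s.
Proof.
  intros Hst Hc.
  destruct (g_mvt s t Hst) as [c [Hc1 Hc2]].
  { intros c Hc'. destruct (Hc c Hc') as [A [B _]]. auto. }
  destruct (Hc c Hc1) as [A [B C]].
  pose proof (f_pos c A B) as F. unfold mean_f in C.
  assert (PSeries a c <= c * Derive (PSeries a) c).
  { apply (Rmult_le_compat_r (PSeries a c)) in C; [|lra].
    field_simplify in C; lra. }
  assert (0 <= (c * Derive (PSeries a) c - 1 * PSeries a c) / PSeries a c ^ 2).
  { apply Rmult_le_pos. lra. left. apply Rinv_0_lt_compat, pow_lt. lra. }
  assert (E : (1 * PSeries a c - c * Derive (PSeries a) c) / PSeries a c ^ 2 =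
     - ((c * Derive (PSeries a) c - 1 * PSeries a c) / PSeries a c ^ 2)) by (field; lra).
  rewrite E in Hc2. nra.
Qed.

Lemma left_ev (Rad : Rbar) (Q : R -> Prop) t0 : 0 <= t0 -> Rbar_lt t0 Rad ->
  (forall x, t0 < x -> Rbar_lt x Rad -> Q x) -> left_of Rad Q.
Proof.
  intros H0 H1 H2. destruct Rad as [r| |]; simpl in *.
  - assert (Hp : 0 < r - t0) by lra.
    exists (mkposreal _ Hp). intros y Hy Hyr. simpl in Hy.
    unfold ball in Hy; simpl in Hy; unfold AbsRing_ball, abs, minus, plus, opp in Hy; simpl in Hy.
    apply H2; auto. apply Rabs_lt_between in Hy. lra.
  - exists t0. intros x Hx. apply H2; auto.
  - contradiction.
Qed.

Lemma kstar_of t1 : 0 <= t1 -> Rbar_lt t1 (CV_radius a) -> 1 < mean_f a t1 -> in_Kstar a.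
Proof.
  intros H1 H2 H3. split; [exact HK|].
  set (E := fun y => exists t, 0 <= t /\ Rbar_lt t (CV_radius a) /\ y = mean_f a t).
  pose proof (Lub_Rbar_correct E) as [Hub Hlub].
  set (l := Lub_Rbar E) in *.
  assert (Hup : forall t, 0 <= t -> Rbar_lt t (CV_radius a) -> Rbar_le (mean_f a t) l).
  { intros t A B. apply Hub. exists t; auto. }
  assert (Hl1 : Rbar_lt 1 l).
  { eapply Rbar_lt_le_trans; [|apply (Hup t1 H1 H2)]. simpl. exact H3. }
  assert (Key : forall y : R, Rbar_lt y l -> exists t0, 0 <= t0 /\ Rbar_lt t0 (CV_radius a) /\ y < mean_f a t0).
  { intros y Hy. destruct (Classical_Prop.classic (exists t0, 0 <= t0 /\ Rbar_lt t0 (CV_radius a) /\ y < mean_f a t0)) as [K|K]; auto.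
    exfalso. assert (Hu : is_ub_Rbar E y).
    { intros z [t [A [B C]]]. subst z. simpl. apply Rnot_lt_le. intro D. apply K. exists t; auto. }
    pose proof (Hlub _ Hu) as HH. exact (Rbar_lt_not_le _ _ Hy HH). }
  assert (Ev : forall y : R, Rbar_lt y l ->
     left_of (CV_radius a) (fun x => y < mean_f a x /\ Rbar_le (mean_f a x) l)).
  { intros y Hy. destruct (Key y Hy) as [t0 [A [B C]]].
    apply (left_ev _ _ t0 A B). intros x Hx Hxr.
    pose proof (m_strict t0 x A Hx Hxr).
    split; [lra|]. apply Hup; [lra|exact Hxr]. }
  exists l. split; [|exact Hl1].
  intros P HP. destruct l as [lv| |] eqn:El.
  - destruct HP as [eps Heps].
    assert (Hy : Rbar_lt (lv - eps) (Finite lv)). { simpl. destruct eps; simpl; lra. }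
    pose proof (Ev _ Hy) as Hev. unfold filtermap.
    destruct (CV_radius a) as [r| |] eqn:ER; simpl in Hev |- *.
    + destruct Hev as [d Hd]. exists d. intros z Hz Hzr.
      destruct (Hd z Hz Hzr) as [U V]. apply Heps. simpl in V.
      unfold ball; simpl; unfold AbsRing_ball, abs, minus, plus, opp; simpl.
      apply Rabs_lt_between. destruct eps; simpl in *; lra.
    + destruct Hev as [M HM]. exists M. intros z Hz.
      destruct (HM z Hz) as [U V]. apply Heps. simpl in V.
      unfold ball; simpl; unfold AbsRing_ball, abs, minus, plus, opp; simpl.
      apply Rabs_lt_between. destruct eps; simpl in *; lra.
    + destruct HK as [HR _]. rewrite ER in HR. simpl in HR. contradiction.
  - destruct HP as [M HM].
    pose proof (Ev M I) as Hev. unfold filtermap.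
    destruct (CV_radius a) as [r| |] eqn:ER; simpl in Hev |- *.
    + destruct Hev as [d Hd]. exists d. intros z Hz Hzr.
      destruct (Hd z Hz Hzr) as [U V]. apply HM. exact U.
    + destruct Hev as [M' HM']. exists M'. intros z Hz.
      destruct (HM' z Hz) as [U V]. apply HM. exact U.
    + destruct HK as [HR _]. rewrite ER in HR. simpl in HR. contradiction.
  - simpl in Hl1. contradiction.
Qed.
End An.

Theorem lemma4p1 (b : nat -> R) :
  in_K b ->
  (forall tau : R,
     in_Kstar b ->
     0 < tau -> Rbar_lt tau (CV_radius b) -> mean_f b tau = 1 ->
     (* (1) strictly increasing on [0, tau) *)
     (forall s t, 0 <= s -> s < t -> t < tau ->
        s / PSeries b s < t / PSeries b t) /\
     (* (2) strictly decreasing on (tau, R) *)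
     (forall s t, tau < s -> s < t -> Rbar_lt t (CV_radius b) ->
        t / PSeries b t < s / PSeries b s) /\
     (* (3) maximum at tau *)
     (forall t, 0 <= t -> Rbar_lt t (CV_radius b) ->
        t / PSeries b t <= tau / PSeries b tau)) /\
  (~ in_Kstar b ->
     forall s t, 0 < s -> s < t -> Rbar_lt t (CV_radius b) ->
        s / PSeries b s < t / PSeries b t).
Proof.
  intro HK.
  assert (Hin : forall c t, c <= t -> Rbar_lt t (CV_radius b) -> Rbar_lt c (CV_radius b)).
  { intros c t H1 H2. eapply Rbar_le_lt_trans; [|exact H2]. simpl; lra. }
  split.
  - intros tau HKs Htau HtauR Hm.
    assert (Inc : forall s t, 0 <= s -> s < t -> t < tau -> s / PSeries b s < t / PSeries b t).
    { intros s t Hs Hst Ht. apply g_incr; auto. intros c Hc.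
      assert (Rbar_lt c (CV_radius b)) by (apply (Hin c tau); [lra|auto]).
      repeat split; try lra; auto.
      rewrite <- Hm. apply m_strict; auto; lra. }
    assert (Dec : forall s t, tau < s -> s < t -> Rbar_lt t (CV_radius b) -> t / PSeries b t < s / PSeries b s).
    { intros s t Hs Hst Ht. apply g_decr; auto. intros c Hc.
      assert (Rbar_lt c (CV_radius b)) by (apply (Hin c t); [lra|auto]).
      repeat split; try lra; auto.
      rewrite <- Hm. apply m_strict; auto; lra. }
    split; [|split].
    + exact Inc.
    + exact Dec.
    + intros t Ht HtR. destruct (Rtotal_order t tau) as [H|[H|H]].
      * apply g_incr_le; auto. intros c Hc.
        assert (Rbar_lt c (CV_radius b)) by (apply (Hin c tau); [lra|auto]).
        repeat split; try lra; auto.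
        destruct (Req_dec c tau) as [E|E].
        -- subst c. lra.
        -- rewrite <- Hm. left. apply m_strict; auto; lra.
      * subst. lra.
      * apply g_decr_le; auto. intros c Hc.
        assert (Rbar_lt c (CV_radius b)) by (apply (Hin c t); [lra|auto]).
        repeat split; try lra; auto.
        destruct (Req_dec c tau) as [E|E].
        -- subst c. lra.
        -- rewrite <- Hm. left. apply m_strict; auto; lra.
  - intros HnK s t Hs Hst Ht. apply g_incr; auto. intros c Hc.
    assert (Rbar_lt c (CV_radius b)) by (apply (Hin c t); [lra|auto]).
    repeat split; try lra; auto.
    apply Rnot_le_lt. intro Hge. apply HnK.
    destruct (Req_dec c t) as [E|E].
    +
      subst c.
      assert (exists t1, t < t1 /\ Rbar_lt t1 (CV_radius b)) as [t1 [T1 T2]].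
      { destruct (CV_radius b) as [r| |]; simpl in Ht |- *.
        - exists ((t + r)/2). split; lra.
        - exists (t + 1). split; [lra|exact I].
        - contradiction. }
      apply (kstar_of b HK t1); auto. lra.
      pose proof (m_strict b HK t t1 ltac:(lra) T1 T2). lra.
    + apply (kstar_of b HK t); auto. lra.
      pose proof (m_strict b HK c t ltac:(lra) ltac:(lra) Ht). lra.
Qed.
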